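(* There is an absolute constant $c$ such that the following holds. Let $K$ be any field, $n\ge3$, $V$ an $n$-dimensional $K$-vector space, and let $1\le k\le 5$. Let $r_1=1+v_1\otimes\phi_1,\ldots,r_k=1+v_k\otimes\phi_k$ be a directed path of transvections, i.e. pairwise distinct transvections with $(r_i,r_{i+1})$ an edge for $1\le i<k$. Assume that if $k=3$ then at least one of $(r_1,r_2)$, $(r_2,r_3)$ is one-way directed, and if $4\le k\le 5$ then both $(r_1,r_2)$ and $(r_{k-1},r_k)$ are one-way directed. Let $Z=r_1^K\cup\cdots\cup r_k^K$. Then there is $\psi\in V^*$ such that $s:=1+(v_1+v_k)\otimes\psi$ is a transvection with $\ell_Z(s^K)\le c$. Similarly, there is $w\in V$ such that $t:=1+w\otimes(\phi_1+\phi_k)$ is a transvection with $\ell_Z(t)\le c$.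
   Context: A transvection is an element $1+d\otimes\phi\in SL(V)$ acting by $x\mapsto x+\phi(x)d$ with $d\in V$, $\phi\in V^*$, $\phi(d)=0$ (the identity is allowed as the trivial transvection; proper transvections have $d\neq0$, $\phi\neq0$). For $r=1+d\otimes\phi$ and $\lambda\in K$, $r^\lambda=1+\lambda d\otimes\phi$, $r^K=\{r^\lambda:\lambda\in K\}$. An edge $(r,s)$ between proper transvections $r=1+d_1\otimes\phi_1$, $s=1+d_2\otimes\phi_2$ means $\phi_2(d_1)\neq0$; it is one-way directed if $(s,r)$ is not an edge. For $A,B\subseteq SL(V)$, $A^m$ is the set of products of $m$ elements of $A$ and $\ell_A(B)=\min\{m:B\subseteq A^m\}$. *)

(* Defs.v *)
From HB Require Import structures.
From mathcomp Require Import all_boot all_order all_algebra.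
Set Implicit Arguments. Unset Strict Implicit. Unset Printing Implicit Defensive.
Import GRing.Theory.
Local Open Scope ring_scope.

(* V = K^n as column vectors 'cV[K]_n, V^* = row vectors 'rV[K]_n,
   phi(x) = (phi *m x) 0 0.  Elements of SL(V) are n x n matrices acting
   on column vectors, so 1 + d (x) phi is the matrix 1 + d *m phi. *)

Definition pairing (K : fieldType) (n : nat) (phi : 'rV[K]_n) (x : 'cV[K]_n) : K :=
  (phi *m x) 0 0.

Definition tv (K : fieldType) (n : nat) (d : 'cV[K]_n) (phi : 'rV[K]_n) : 'M[K]_n :=
  1%:M + d *m phi.

Definition edge (K : fieldType) (n : nat) (d1 : 'cV[K]_n) (phi1 : 'rV[K]_n)
  (d2 : 'cV[K]_n) (phi2 : 'rV[K]_n) : Prop :=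
  pairing phi2 d1 <> 0.

Definition one_way (K : fieldType) (n : nat) (d1 : 'cV[K]_n) (phi1 : 'rV[K]_n)
  (d2 : 'cV[K]_n) (phi2 : 'rV[K]_n) : Prop :=
  edge d1 phi1 d2 phi2 /\ ~ edge d2 phi2 d1 phi1.

Definition prod_pow (K : fieldType) (n : nat) (A : 'M[K]_n -> Prop) (m : nat)
  (M : 'M[K]_n) : Prop :=
  exists s : seq 'M[K]_n,
    size s = m /\ (forall x, x \in s -> A x) /\ M = foldr mulmx 1%:M s.

Definition length_le (K : fieldType) (n : nat) (A B : 'M[K]_n -> Prop) (c : nat) : Prop :=
  exists m, (m <= c)%N /\ forall M, B M -> prod_pow A m M.

Definition tv_line (K : fieldType) (n : nat) (d : 'cV[K]_n) (phi : 'rV[K]_n)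
  (M : 'M[K]_n) : Prop :=
  exists lambda : K, M = tv (lambda *: d) phi.

(* Main.v *)
From HB Require Import structures.
From mathcomp Require Import all_boot all_order all_algebra.
From mathcomp Require Import ring.
Require Import Defs.
Set Implicit Arguments. Unset Strict Implicit. Unset Printing Implicit Defensive.
Import GRing.Theory.
Local Open Scope ring_scope.

Lemma pairing_mx (K : fieldType) n (a : 'rV[K]_n) (x : 'cV[K]_n) : a *m x = (pairing a x)%:M.
Proof. by rewrite /pairing {1}[a *m x]mx11_scalar. Qed.

Lemma r1mul (K : fieldType) n (x y : 'cV[K]_n) (a b : 'rV[K]_n) :
  (x *m a) *m (y *m b) = pairing a y *: (x *m b).
Proof. by rewrite mulmxA -(mulmxA x) pairing_mx mul_mx_scalar -scalemxAl. Qed.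

Lemma tv_mul (K : fieldType) n (x y : 'cV[K]_n) (a b : 'rV[K]_n) :
  tv x a *m tv y b = 1%:M + x *m a + y *m b + pairing a y *: (x *m b).
Proof.
rewrite /tv mulmxDl mulmxDr !mul1mx mulmxDr mulmx1 r1mul.
by rewrite !addrA (addrAC _ (y *m b)).
Qed.

Lemma pairingZr (K : fieldType) n (a : 'rV[K]_n) (x : 'cV[K]_n) c : pairing a (c *: x) = c * pairing a x.
Proof. by rewrite /pairing -scalemxAr mxE. Qed.
Lemma pairingZl (K : fieldType) n (a : 'rV[K]_n) (x : 'cV[K]_n) c : pairing (c *: a) x = c * pairing a x.
Proof. by rewrite /pairing -scalemxAl mxE. Qed.
Lemma pairingDr (K : fieldType) n (a : 'rV[K]_n) (x y : 'cV[K]_n) : pairing a (x + y) = pairing a x + pairing a y.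
Proof. by rewrite /pairing mulmxDr mxE. Qed.
Lemma pairingDl (K : fieldType) n (a b : 'rV[K]_n) (x : 'cV[K]_n) : pairing (a + b) x = pairing a x + pairing b x.
Proof. by rewrite /pairing mulmxDl mxE. Qed.
Lemma pairingNl (K : fieldType) n (a : 'rV[K]_n) (x : 'cV[K]_n) : pairing (- a) x = - pairing a x.
Proof. by rewrite /pairing mulNmx mxE. Qed.
Lemma pairingNr (K : fieldType) n (a : 'rV[K]_n) (x : 'cV[K]_n) : pairing a (- x) = - pairing a x.
Proof. by rewrite /pairing mulmxN mxE. Qed.

Definition pairingE := (pairingZr, pairingZl, pairingDr, pairingDl, pairingNl, pairingNr).

Ltac mxring := apply/matrixP => i j; rewrite !(mxE, big_ord1); ring.

Lemma foldr_mul_cat (K : fieldType) n (s1 s2 : seq 'M[K]_n) :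
  foldr mulmx 1%:M (s1 ++ s2) = foldr mulmx 1%:M s1 *m foldr mulmx 1%:M s2.
Proof. elim: s1 => [|a s IH] /=; first by rewrite mul1mx. by rewrite IH mulmxA. Qed.

Lemma pp_mul (K : fieldType) n (Z : 'M[K]_n -> Prop) m1 m2 A B :
  prod_pow Z m1 A -> prod_pow Z m2 B -> prod_pow Z (m1 + m2) (A *m B).
Proof.
move=> [s1 [h1 [hs1 ->]]] [s2 [h2 [hs2 ->]]]; exists (s1 ++ s2); split.
  by rewrite size_cat h1 h2.
split; last by rewrite foldr_mul_cat.
by move=> x; rewrite mem_cat => /orP [] ?; [apply: hs1 | apply: hs2].
Qed.

Lemma pp1 (K : fieldType) n (Z : 'M[K]_n -> Prop) M : Z M -> prod_pow Z 1 M.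
Proof.
move=> hM; exists [:: M]; split => //; split; last by rewrite /= mulmx1.
by move=> x; rewrite inE => /eqP ->.
Qed.

Definition LN (K : fieldType) n (Z : 'M[K]_n -> Prop) m (x : 'cV[K]_n) (a : 'rV[K]_n) :=
  pairing a x = 0 /\ forall l : K, prod_pow Z m (tv (l *: x) a).

Lemma LN_base (K : fieldType) n (Z : 'M[K]_n -> Prop) x a :
  pairing a x = 0 -> (forall l, Z (tv (l *: x) a)) -> LN Z 1 x a.
Proof. by move=> h1 h2; split => // l; apply: pp1. Qed.

Lemma LN_scx (K : fieldType) n (Z : 'M[K]_n -> Prop) m x a c :
  LN Z m x a -> LN Z m (c *: x) a.
Proof.
move=> [h1 h2]; split; first by rewrite pairingE h1 mulr0.
by move=> l; rewrite scalerA; apply: h2.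
Qed.

Lemma LN_sca (K : fieldType) n (Z : 'M[K]_n -> Prop) m x a c :
  LN Z m x a -> LN Z m x (c *: a).
Proof.
move=> [h1 h2]; split; first by rewrite pairingE h1 mulr0.
move=> l; have -> : tv (l *: x) (c *: a) = tv ((l * c) *: x) a by rewrite /tv; mxring.
exact: h2.
Qed.

Lemma LN_add (K : fieldType) n (Z : 'M[K]_n -> Prop) m1 m2 x y a :
  LN Z m1 x a -> LN Z m2 y a -> LN Z (m1 + m2) (x + y) a.
Proof.
move=> [h1 h2] [h3 h4]; split; first by rewrite pairingE h1 h3 addr0.
move=> l; have -> : tv (l *: (x + y)) a = tv (l *: x) a *m tv (l *: y) a.
  by rewrite tv_mul !pairingE h3 /tv; mxring.
exact: pp_mul.
Qed.

Lemma LN_add' (K : fieldType) n (Z : 'M[K]_n -> Prop) m1 m2 x a b :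
  LN Z m1 x a -> LN Z m2 x b -> LN Z (m1 + m2) x (a + b).
Proof.
move=> [h1 h2] [h3 h4]; split; first by rewrite pairingE h1 h3 addr0.
move=> l; have -> : tv (l *: x) (a + b) = tv (l *: x) a *m tv (l *: x) b.
  by rewrite tv_mul !pairingE h1 /tv; mxring.
exact: pp_mul.
Qed.

Lemma conj_eq (K : fieldType) n (x y : 'cV[K]_n) (a b : 'rV[K]_n) mu :
  pairing b y = 0 ->
  tv (mu *: y) b *m tv x a *m tv (- mu *: y) b =
  tv (x + (mu * pairing b x) *: y) (a - (mu * pairing a y) *: b).
Proof.
move=> hb.
have e1 : tv (mu *: y) b *m tv x a =
   tv (x + (mu * pairing b x) *: y) (a - (mu * pairing a y) *: b) *m tv (mu *: y) b.
  rewrite !tv_mul !pairingE hb /tv; mxring.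
have e2 : tv (mu *: y) b *m tv (- mu *: y) b = 1%:M.
  rewrite !tv_mul !pairingE hb /tv; mxring.
by rewrite e1 -mulmxA e2 mulmx1.
Qed.

Lemma LN_conj (K : fieldType) n (Z : 'M[K]_n -> Prop) m1 m2 x y a b mu :
  LN Z m1 x a -> LN Z m2 y b ->
  LN Z (m2 + m1 + m2) (x + (mu * pairing b x) *: y) (a - (mu * pairing a y) *: b).
Proof.
move=> [h1 h2] [h3 h4]; split.
  rewrite !pairingE h1 h3; ring.
move=> l.
have -> : tv (l *: (x + (mu * pairing b x) *: y)) (a - (mu * pairing a y) *: b) =
  tv (mu *: y) b *m tv (l *: x) a *m tv (- mu *: y) b.
  rewrite conj_eq // !pairingE; congr tv; apply/matrixP => i j; rewrite !mxE; ring.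
by apply: pp_mul; first apply: pp_mul.
Qed.

Lemma LN_comm (K : fieldType) n (Z : 'M[K]_n -> Prop) m1 m2 x y a b :
  LN Z m1 x a -> LN Z m2 y b -> pairing b x = 0 -> pairing a y != 0 ->
  LN Z (m1 + m2 + m1 + m2) x b.
Proof.
move=> [h1 h2] [h3 h4] hbx hay; split => // l.
set c := pairing a y.
have -> : tv (l *: x) b =
  tv ((l / c) *: x) a *m tv (1 *: y) b *m tv (- (l / c) *: x) a *m tv ((-1) *: y) b.
  rewrite conj_eq // tv_mul !pairingE hbx h3 /tv.
  apply/matrixP => i j; rewrite !(mxE, big_ord1) -/c.
  field; done.
apply: pp_mul; last exact: h4.
by apply: pp_mul; first apply: pp_mul.
Qed.

Definition Sgoal (K : fieldType) n (Z : 'M[K]_n -> Prop) (u : 'cV[K]_n) :=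
  exists psi : 'rV[K]_n, exists m, [/\ psi != 0, (m <= 100)%N & LN Z m u psi].

Lemma Sg_of (K : fieldType) n (Z : 'M[K]_n -> Prop) m u psi :
  LN Z m u psi -> psi != 0 -> (m <= 100)%N -> Sgoal Z u.
Proof. by move=> h1 h2 h3; exists psi, m. Qed.

Lemma form_neq0 (K : fieldType) n (a b : 'rV[K]_n) (y : 'cV[K]_n) mu :
  a != 0 -> pairing b y = 0 -> a - (mu * pairing a y) *: b != 0.
Proof.
move=> ha hb; apply/negP => /eqP h.
have e : a = (mu * pairing a y) *: b by apply/eqP; rewrite -subr_eq0 h.
have hp : pairing a y = 0 by rewrite {1}e pairingE hb mulr0.
by move: ha; rewrite e hp mulr0 scale0r eqxx.
Qed.

Lemma fin_conj (K : fieldType) n (Z : 'M[K]_n -> Prop) m m' x y a b :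
  LN Z m x a -> LN Z m' y b -> pairing b x != 0 -> a != 0 ->
  (m' + m + m' <= 100)%N -> Sgoal Z (x + y).
Proof.
move=> h1 h2 hbx ha hm.
have := LN_conj (pairing b x)^-1 h1 h2; rewrite mulVf // scale1r => h.
apply: (Sg_of h) => //; apply: form_neq0 => //; exact: h2.1.
Qed.

Lemma fin_conj' (K : fieldType) n (Z : 'M[K]_n -> Prop) m m' x y a b :
  LN Z m x a -> LN Z m' y b -> pairing b x != 0 -> a != 0 ->
  (m' + m + m' <= 100)%N -> Sgoal Z (y + x).
Proof. by rewrite addrC; apply: fin_conj. Qed.

Lemma fin_add (K : fieldType) n (Z : 'M[K]_n -> Prop) m m' x y a :
  LN Z m x a -> LN Z m' y a -> a != 0 -> (m + m' <= 100)%N -> Sgoal Z (x + y).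
Proof. by move=> h1 h2 ha hm; apply: (Sg_of (LN_add h1 h2)). Qed.

Lemma LN_eq (K : fieldType) n (Z : 'M[K]_n -> Prop) m x a x' a' :
  LN Z m x a -> x = x' -> a = a' -> LN Z m x' a'.
Proof. by move=> h <- <-. Qed.

Lemma s1 (K : fieldType) n (Z : 'M[K]_n -> Prop) v1 f1 :
  (forall l, Z (tv (l *: v1) f1)) -> pairing f1 v1 = 0 -> f1 != 0 ->
  Sgoal Z (v1 + v1).
Proof.
move=> z1 p1 n1; have L1 := LN_base p1 z1.
by apply: (fin_add L1 L1 n1).
Qed.

Lemma s2 (K : fieldType) n (Z : 'M[K]_n -> Prop) v1 f1 v2 f2 :
  (forall l, Z (tv (l *: v1) f1)) -> pairing f1 v1 = 0 -> f1 != 0 ->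
  (forall l, Z (tv (l *: v2) f2)) -> pairing f2 v2 = 0 -> f2 != 0 ->
  pairing f2 v1 != 0 ->
  Sgoal Z (v1 + v2).
Proof.
move=> z1 p1 n1 z2 p2 n2 e12; have L1 := LN_base p1 z1; have L2 := LN_base p2 z2.
by apply: (fin_conj L1 L2 e12 n1).
Qed.

Lemma s3 (K : fieldType) n (Z : 'M[K]_n -> Prop) v1 f1 v2 f2 v3 f3 :
  (forall l, Z (tv (l *: v1) f1)) -> pairing f1 v1 = 0 -> f1 != 0 ->
  (forall l, Z (tv (l *: v2) f2)) -> pairing f2 v2 = 0 -> f2 != 0 ->
  (forall l, Z (tv (l *: v3) f3)) -> pairing f3 v3 = 0 -> f3 != 0 ->
  pairing f2 v1 != 0 -> pairing f3 v2 != 0 ->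
  pairing f1 v2 = 0 \/ pairing f2 v3 = 0 ->
  Sgoal Z (v1 + v3).
Proof.
move=> z1 p1 n1 z2 p2 n2 z3 p3 n3 e12 e23 ow.
have L1 := LN_base p1 z1; have L2 := LN_base p2 z2; have L3 := LN_base p3 z3.
have [a31|a31] := eqVneq (pairing f1 v3) 0; last by apply: (fin_conj' L3 L1 a31 n3).
have [a13|a13] := eqVneq (pairing f3 v1) 0; last by apply: (fin_conj L1 L3 a13 n1).
case: ow => [a21|a32].
  have C1 := LN_comm L2 L1 a21 e12.
  have C2 := LN_comm L3 C1 a31 e23.
  by apply: (fin_add L1 C2 n1).
have C := LN_comm L3 L2 a32 e23.
by apply: (fin_conj L1 C e12 n1).
Qed.

Lemma s4 (K : fieldType) n (Z : 'M[K]_n -> Prop) v1 f1 v2 f2 v3 f3 v4 f4 :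
  (forall l, Z (tv (l *: v1) f1)) -> pairing f1 v1 = 0 -> f1 != 0 ->
  (forall l, Z (tv (l *: v2) f2)) -> pairing f2 v2 = 0 -> f2 != 0 ->
  (forall l, Z (tv (l *: v3) f3)) -> pairing f3 v3 = 0 -> f3 != 0 ->
  (forall l, Z (tv (l *: v4) f4)) -> pairing f4 v4 = 0 -> f4 != 0 ->
  pairing f2 v1 != 0 -> pairing f3 v2 != 0 -> pairing f4 v3 != 0 ->
  pairing f1 v2 = 0 -> pairing f3 v4 = 0 ->
  Sgoal Z (v1 + v4).
Proof.
move=> z1 p1 n1 z2 p2 n2 z3 p3 n3 z4 p4 n4 e12 e23 e34 a21 a43.
have L1 := LN_base p1 z1; have L2 := LN_base p2 z2; have L3 := LN_base p3 z3.
have L4 := LN_base p4 z4.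
have [a41|a41] := eqVneq (pairing f1 v4) 0; last by apply: (fin_conj' L4 L1 a41 n4).
have [a14|a14] := eqVneq (pairing f4 v1) 0; last by apply: (fin_conj L1 L4 a14 n1).
have [a31|a31] := eqVneq (pairing f1 v3) 0.
  have C1 := LN_comm L2 L1 a21 e12.
  have C2 := LN_comm L3 C1 a31 e23.
  have C3 := LN_comm L4 C2 a41 e34.
  by apply: (fin_add L1 C3 n1).
have D := LN_comm L4 L3 a43 e34.
have [a13|a13] := eqVneq (pairing f3 v1) 0; last by apply: (fin_conj L1 D a13 n1).
have E := LN_comm L1 L3 a13 a31.
by apply: (fin_add E D n3).
Qed.

Lemma s5 (K : fieldType) n (Z : 'M[K]_n -> Prop) v1 f1 v2 f2 v3 f3 v4 f4 v5 f5 :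
  (forall l, Z (tv (l *: v1) f1)) -> pairing f1 v1 = 0 -> f1 != 0 ->
  (forall l, Z (tv (l *: v2) f2)) -> pairing f2 v2 = 0 -> f2 != 0 ->
  (forall l, Z (tv (l *: v3) f3)) -> pairing f3 v3 = 0 -> f3 != 0 ->
  (forall l, Z (tv (l *: v4) f4)) -> pairing f4 v4 = 0 -> f4 != 0 ->
  (forall l, Z (tv (l *: v5) f5)) -> pairing f5 v5 = 0 -> f5 != 0 ->
  pairing f2 v1 != 0 -> pairing f3 v2 != 0 -> pairing f4 v3 != 0 -> pairing f5 v4 != 0 ->
  pairing f1 v2 = 0 -> pairing f4 v5 = 0 ->
  Sgoal Z (v1 + v5).
Proof.
move=> z1 p1 n1 z2 p2 n2 z3 p3 n3 z4 p4 n4 z5 p5 n5 e12 e23 e34 e45 a21 a54.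
have L1 := LN_base p1 z1; have L2 := LN_base p2 z2; have L3 := LN_base p3 z3.
have L4 := LN_base p4 z4; have L5 := LN_base p5 z5.
have F := LN_comm L5 L4 a54 e45.
have [a51|a51] := eqVneq (pairing f1 v5) 0; last by apply: (fin_conj' L5 L1 a51 n5).
have [a15|a15] := eqVneq (pairing f5 v1) 0; last by apply: (fin_conj L1 L5 a15 n1).
have [a14|a14] := eqVneq (pairing f4 v1) 0; last by apply: (fin_conj L1 F a14 n1).
have [a41|a41] := eqVneq (pairing f1 v4) 0; last first.
  have G := LN_comm L1 L4 a14 a41.
  by apply: (fin_add G F n4).
have [a31|a31] := eqVneq (pairing f1 v3) 0.
  have C1 := LN_comm L2 L1 a21 e12.
  have C2 := LN_comm L3 C1 a31 e23.
  have C3 := LN_comm L4 C2 a41 e34.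
  have C4 := LN_comm L5 C3 a51 e45.
  by apply: (fin_add L1 C4 n1).
have [a53|a53] := eqVneq (pairing f3 v5) 0.
  have H := LN_comm F L3 a53 e34.
  have [a13|a13] := eqVneq (pairing f3 v1) 0; last by apply: (fin_conj L1 H a13 n1).
  have E := LN_comm L1 L3 a13 a31.
  by apply: (fin_add E H n3).
set a34 := pairing f4 v3; set a35 := pairing f5 v3.
set psi := a34 *: f5 + (- a35) *: f4.
have P1 := LN_conj 1 L5 L3.
have P2 := LN_conj 1 F L3.
have Q := LN_add' (LN_sca a34 P1) (LN_sca (- a35) P2).
have ef : a34 *: (f5 - (1 * pairing f5 v3) *: f3) + - a35 *: (f4 - (1 * pairing f4 v3) *: f3) = psi.
  by rewrite /psi; apply/matrixP => i j; rewrite !mxE /a34 /a35; ring.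
have Q' := LN_eq Q (erefl _) ef.
have R0 := LN_add' (LN_sca a34 L5) (LN_sca (- a35) F).
have S := LN_add Q' (LN_scx (-1) R0).
have es : v5 + (1 * pairing f3 v5) *: v3 + (-1) *: v5 = pairing f3 v5 *: v3.
  by apply/matrixP => i j; rewrite !mxE; ring.
have S' := LN_eq S es (erefl _).
have hpv1 : pairing psi v1 = 0 by rewrite /psi !pairingE a15 a14; ring.
have hav : pairing f1 (pairing f3 v5 *: v3) != 0 by rewrite pairingE mulf_neq0.
have T := LN_comm L1 S' hpv1 hav.
have npsi : psi != 0.
  apply/negP => /eqP h.
  have : pairing psi v4 = 0 by rewrite h /pairing mul0mx mxE.
  rewrite /psi !pairingE p4 mulr0 addr0; apply/eqP; exact: mulf_neq0.
by apply: (fin_add T R0 npsi).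
Qed.

Lemma tv_tr (K : fieldType) n (x : 'cV[K]_n) (f : 'rV[K]_n) l :
  (tv (l *: f^T) x^T)^T = tv (l *: x) f.
Proof. rewrite /tv linearD /= trmx1; mxring. Qed.

Lemma pairing_tr (K : fieldType) n (x : 'cV[K]_n) (f : 'rV[K]_n) :
  pairing x^T f^T = pairing f x.
Proof. by rewrite /pairing -trmx_mul mxE. Qed.

Lemma pp_tr (K : fieldType) n (Z : 'M[K]_n -> Prop) m N :
  prod_pow (fun M => Z M^T) m N -> prod_pow Z m N^T.
Proof.
move=> [s [hs [hz ->]]]; exists (rev (map trmx s)); split.
  by rewrite size_rev size_map.
split.
  move=> x; rewrite mem_rev => /mapP [y ys ->]; exact: hz.
elim: s {hs hz} => [|a s IH] /=; first by rewrite trmx1.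
by rewrite trmx_mul IH rev_cons -cats1 foldr_mul_cat /= mulmx1.
Qed.

Lemma ztr (K : fieldType) n (Z : 'M[K]_n -> Prop) x f :
  (forall l, Z (tv (l *: x) f)) -> forall l, (fun M => Z M^T) (tv (l *: f^T) x^T).
Proof. by move=> h l /=; rewrite tv_tr. Qed.

Lemma trmx_neq0 (K : fieldType) m n (A : 'M[K]_(m, n)) : A != 0 -> A^T != 0.
Proof. by rewrite trmx_eq0. Qed.

Lemma not_edge (K : fieldType) n (d1 : 'cV[K]_n) f1 d2 f2 :
  ~ edge d1 f1 d2 f2 -> pairing f2 d1 = 0.
Proof.
rewrite /edge => h; case: (eqVneq (pairing f2 d1) 0) => // ne.
by exfalso; apply: h; apply/eqP.
Qed.

Lemma edge_neq (K : fieldType) n (d1 : 'cV[K]_n) f1 d2 f2 :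
  edge d1 f1 d2 f2 -> pairing f2 d1 != 0.
Proof. by move=> h; apply/eqP. Qed.

Lemma Sgoal_s (K : fieldType) n (Z : 'M[K]_n -> Prop) u :
  Sgoal Z u ->
  exists psi, [/\ psi != 0, pairing psi u = 0 & length_le Z (tv_line u psi) 100].
Proof.
move=> [psi [m [h1 h2 [h3 h4]]]]; exists psi; split => //.
by exists m; split => // M [l ->]; exact: h4.
Qed.

Lemma Sgoal_t (K : fieldType) n (Z : 'M[K]_n -> Prop) (f0 f1 : 'rV[K]_n) :
  Sgoal (fun M => Z M^T) (f1^T + f0^T) ->
  exists w, [/\ w != 0, pairing (f0 + f1) w = 0 &
     length_le Z (fun M => M = tv w (f0 + f1)) 100].
Proof.
move=> [psi [m [h1 h2 [h3 h4]]]]; exists psi^T; split.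
- exact: trmx_neq0.
- have -> : f0 + f1 = (f1^T + f0^T)^T by rewrite linearD /= !trmxK addrC.
  by rewrite pairing_tr.
exists m; split => // M ->.
have -> : tv psi^T (f0 + f1) = (tv (1 *: (f1^T + f0^T)) psi)^T by rewrite /tv !linearD /= trmx1; mxring.
exact: pp_tr.
Qed.

Local Close Scope ring_scope.

Theorem lemma4p10 :
  exists c : nat,
  forall (K : fieldType) (n : nat), 3 <= n ->
  forall (k : nat), 1 <= k <= 5 ->
  forall (v : nat -> 'cV[K]_n) (phi : nat -> 'rV[K]_n),
    (* each r_i = 1 + v_i (x) phi_i is a proper transvection *)
    (forall i, i < k -> [/\ v i != 0%R, phi i != 0%R & pairing (phi i) (v i) = 0%R]) ->
    (* pairwise distinct *)
    (forall i j, i < k -> j < k -> i <> j ->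
        tv (v i) (phi i) <> tv (v j) (phi j)) ->
    (* directed path *)
    (forall i, i.+1 < k -> edge (v i) (phi i) (v i.+1) (phi i.+1)) ->
    (k = 3 -> one_way (v 0) (phi 0) (v 1) (phi 1) \/
              one_way (v 1) (phi 1) (v 2) (phi 2)) ->
    (4 <= k <= 5 -> one_way (v 0) (phi 0) (v 1) (phi 1) /\
              one_way (v k.-2) (phi k.-2) (v k.-1) (phi k.-1)) ->
    let Z := fun M : 'M[K]_n => exists2 i, i < k & tv_line (v i) (phi i) M in
    (exists psi : 'rV[K]_n,
        [/\ psi != 0%R, pairing psi (v 0%N + v k.-1)%R = 0%R &
            length_le Z (tv_line (v 0%N + v k.-1)%R psi) c]) /\
    (exists w : 'cV[K]_n,
        [/\ w != 0%R, pairing (phi 0%N + phi k.-1)%R w = 0%R &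
            length_le Z (fun M => M = tv w (phi 0%N + phi k.-1)%R) c]).
Proof.
exists 100 => K n _ k hk v phi hprop _ hpath h3 h45 Z.
have zi : forall i, i < k -> forall l, Z (tv (l *: v i) (phi i))%R.
  by move=> i hi l; exists i => //; exists l.
clearbody Z.
move: hk hprop hpath h3 h45 zi; case: k => [|[|[|[|[|[|k]]]]]] //= _ hprop hpath h3 h45 zi.
- have [w0 n0 p0] := hprop 0 isT; have z0 := zi 0 isT.
  split; first by apply: Sgoal_s; apply: (s1 z0).
  by apply: Sgoal_t; apply: (s1 (ztr z0)) => //; [rewrite pairing_tr | exact: trmx_neq0].
- have [w0 n0 p0] := hprop 0 isT; have z0 := zi 0 isT.
  have [w1 n1 p1] := hprop 1 isT; have z1 := zi 1 isT.
  have e01 := edge_neq (hpath 0 isT).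
  split; first by apply: Sgoal_s; apply: (s2 z0 p0 n0 z1 p1 n1).
  apply: Sgoal_t; apply: (s2 (ztr z1) _ _ (ztr z0));
    rewrite ?pairing_tr //; exact: trmx_neq0.
- have [w0 n0 p0] := hprop 0 isT; have z0 := zi 0 isT.
  have [w1 n1 p1] := hprop 1 isT; have z1 := zi 1 isT.
  have [w2 n2 p2] := hprop 2 isT; have z2 := zi 2 isT.
  have e01 := edge_neq (hpath 0 isT).
  have e12 := edge_neq (hpath 1 isT).
  have ow : pairing (phi 0) (v 1) = 0%R \/ pairing (phi 1) (v 2) = 0%R.
    by case: (h3 erefl) => [[_ /not_edge]|[_ /not_edge]]; [left|right].
  split; first by apply: Sgoal_s; apply: (s3 z0 p0 n0 z1 p1 n1 z2 p2 n2).
  apply: Sgoal_t; apply: (s3 (ztr z2) _ _ (ztr z1) _ _ (ztr z0));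
    rewrite ?pairing_tr //; try exact: trmx_neq0.
  by case: ow; [right|left].
- have [w0 n0 p0] := hprop 0 isT; have z0 := zi 0 isT.
  have [w1 n1 p1] := hprop 1 isT; have z1 := zi 1 isT.
  have [w2 n2 p2] := hprop 2 isT; have z2 := zi 2 isT.
  have [w3 n3 p3] := hprop 3 isT; have z3 := zi 3 isT.
  have e01 := edge_neq (hpath 0 isT).
  have e12 := edge_neq (hpath 1 isT).
  have e23 := edge_neq (hpath 2 isT).
  have [[_ /not_edge a10] [_ /not_edge a32]] := h45 isT.
  split; first by apply: Sgoal_s; apply: (s4 z0 p0 n0 z1 p1 n1 z2 p2 n2 z3 p3 n3).
  apply: Sgoal_t; apply: (s4 (ztr z3) _ _ (ztr z2) _ _ (ztr z1) _ _ (ztr z0));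
    rewrite ?pairing_tr //; exact: trmx_neq0.
- have [w0 n0 p0] := hprop 0 isT; have z0 := zi 0 isT.
  have [w1 n1 p1] := hprop 1 isT; have z1 := zi 1 isT.
  have [w2 n2 p2] := hprop 2 isT; have z2 := zi 2 isT.
  have [w3 n3 p3] := hprop 3 isT; have z3 := zi 3 isT.
  have [w4 n4 p4] := hprop 4 isT; have z4 := zi 4 isT.
  have e01 := edge_neq (hpath 0 isT).
  have e12 := edge_neq (hpath 1 isT).
  have e23 := edge_neq (hpath 2 isT).
  have e34 := edge_neq (hpath 3 isT).
  have [[_ /not_edge a10] [_ /not_edge a43]] := h45 isT.
  split; first by apply: Sgoal_s; apply: (s5 z0 p0 n0 z1 p1 n1 z2 p2 n2 z3 p3 n3 z4 p4 n4).
  apply: Sgoal_t; apply: (s5 (ztr z4) _ _ (ztr z3) _ _ (ztr z2) _ _ (ztr z1) _ _ (ztr z0));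
    rewrite ?pairing_tr //; exact: trmx_neq0.
Qed.
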